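(* For every $A\ge0$ and $T>0$ there is $B\ge0$ (depending only on $A$, $T$ and $f,r$) such that: if $y$ solves $y_t+f(y)_x=y_{xx}+r(y)$ on $[0,1]\times(0,T)$ with $y(0,t)=y(1,t)=0$ and $\|y(\cdot,0)\|_\infty\le A$, then $\|y(\cdot,t)\|_\infty\le B$ for all $t<T$.
   Context: Standing assumptions: $f,r\in C^2(\mathbb R)$ and $\int_{-\infty}^0\frac{dy}{|r(y)|+1}=\int_0^\infty\frac{dy}{|r(y)|+1}=\infty$. Solutions are classical solutions with initial data in $H^1_0(0,1)$. *)

(* Defs.v *)
From HB Require Import structures.
From mathcomp Require Import all_boot all_order all_algebra.
From mathcomp Require Import all_classical all_reals all_analysis.
Set Implicit Arguments. Unset Strict Implicit. Unset Printing Implicit Defensive.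
Import Order.TTheory GRing.Theory Num.Theory.
Import numFieldNormedType.Exports.
Local Open Scope classical_set_scope.
Local Open Scope ring_scope.

Definition C2 {R : realType} (f : R -> R) : Prop :=
  (forall x, derivable f x 1) /\
  (forall x, derivable (derive1 f) x 1) /\
  continuous (derive1 (derive1 f)).

Definition growth_cond {R : realType} (r : R -> R) : Prop :=
  (\int[@lebesgue_measure R]_(s in `]-oo, (0%R:R)]) ((`|r s| + 1)^-1)%R%:E = +oo)%E /\
  (\int[@lebesgue_measure R]_(s in `[(0%R:R), +oo[) ((`|r s| + 1)^-1)%R%:E = +oo)%E.

(* H^1_0(0,1): (the continuous representative of) y0 is the primitive
   x |-> int_0^x g of some g in L^2(0,1), and vanishes at 0 and 1. *)
Definition H10 {R : realType} (y0 : R -> R) : Prop :=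
  exists g : R -> R,
    measurable_fun `[(0:R), 1] g /\
    (\int[@lebesgue_measure R]_(s in `[(0%R:R), 1%R]) ((g s) ^+ 2)%R%:E < +oo)%E /\
    (forall x, 0 <= x <= 1 ->
       y0 x = Rintegral (@lebesgue_measure R) `[(0:R), x] g) /\
    y0 0 = 0 /\ y0 1 = 0.

Definition dx {R : realType} (y : R -> R -> R) (x t : R) : R :=
  derive1 (fun z => y z t) x.
Definition dxx {R : realType} (y : R -> R -> R) (x t : R) : R :=
  derive1 (fun z => dx y z t) x.
Definition dt {R : realType} (y : R -> R -> R) (x t : R) : R :=
  derive1 (fun s => y x s) t.

Definition uncurry2 {R : realType} (F : R -> R -> R) : R * R -> R :=
  fun p => F p.1 p.2.

Definition interior_QT {R : realType} (T : R) : set (R * R) :=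
  [set p | 0 < p.1 < 1 /\ 0 < p.2 < T].

Definition classical_solution {R : realType} (f r : R -> R) (T : R)
    (y : R -> R -> R) : Prop :=
  {within [set p : R * R | 0 <= p.1 <= 1 /\ 0 <= p.2 < T],
     continuous (uncurry2 y)} /\
  (forall x t, 0 < x < 1 -> 0 < t < T ->
     [/\ derivable (fun z => y z t) x 1,
         derivable (fun z => dx y z t) x 1,
         derivable (fun s => y x s) t 1 &
         derivable (fun z => f (y z t)) x 1]) /\
  {within interior_QT T, continuous (uncurry2 (dx y))} /\
  {within interior_QT T, continuous (uncurry2 (dxx y))} /\
  {within interior_QT T, continuous (uncurry2 (dt y))} /\
  (forall x t, 0 < x < 1 -> 0 < t < T ->
     dt y x t + derive1 (fun z => f (y z t)) x = dxx y x t + r (y x t)) /\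
  (forall t, 0 <= t < T -> y 0 t = 0 /\ y 1 t = 0) /\
  H10 (fun x => y x 0).

(* Main.v *)
Require Import Defs.
From HB Require Import structures.
From mathcomp Require Import all_boot all_order all_algebra.
From mathcomp Require Import all_classical all_reals all_analysis.
From mathcomp Require Import lra measurable_realfun.
Import Order.TTheory GRing.Theory Num.Theory.
Import numFieldNormedType.Exports.
Local Open Scope ring_scope.

Module Helpers.
Local Open Scope classical_set_scope.
Local Open Scope ring_scope.
Set Implicit Arguments. Unset Strict Implicit. Unset Printing Implicit Defensive.
Section S.
Variable R : realType.

Lemma derivable_cont (u : R -> R) x : derivable u x 1 -> {for x, continuous u}.
Proof. by move=> /derivable1_diffP /differentiable_continuous. Qed.

Lemma dnbhs0P (P : R -> Prop) : (\forall h \near (0:R)^', P h) ->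
  exists2 e : R, 0 < e & forall h : R, 0 < `|h| < e -> P h.
Proof.
move=> [e /= e0 He]; exists e => // h /andP[h0 he]; apply: He.
  by rewrite /= sub0r normrN.
by rewrite -normr_gt0.
Qed.

Lemma max_1d (u u1 : R -> R) (x d : R) :
  0 < x < 1 ->
  (forall z : R, 0 < z < 1 -> is_derive z 1 u (u1 z)) ->
  is_derive x 1 u1 d ->
  (forall z : R, 0 <= z <= 1 -> u z <= u x) ->
  u1 x = 0 /\ d <= 0.
Proof.
move=> /andP[x0 x1] du du1 umax.
have u10 : u1 x = 0.
  have := @derive1_at_max R u 0 1 x ler01.
  case/(_ _ _ _)/Wrap.
  - by move=> t; rewrite in_itv/= => /du [].
  - by rewrite in_itv/= x0 x1.
  - by move=> t; rewrite in_itv/= => /andP[? ?]; apply: umax; rewrite !ltW.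
  move=> H; have := du x; rewrite x0 x1 => /(_ isT) Hd.
  by rewrite -(@derive_val _ _ _ _ _ _ _ Hd) (@derive_val _ _ _ _ _ _ _ H).
split=> //; rewrite leNgt; apply/negP => d0.
have Hc : (fun h => h^-1 *: ((u1 \o shift x) (h *: 1) - u1 x)) @ 0^' --> d.
  rewrite -(@derive_val _ _ _ _ _ _ _ du1); exact: (@ex_derive _ _ _ _ _ _ _ du1).
have : \forall h \near 0^', 0 < h^-1 *: ((u1 \o shift x) (h *: 1) - u1 x).
  exact: (cvgr_gt _ Hc _ d0).
move=> /dnbhs0P [e e0 He].
set h0 := Num.min (e / 2) ((1 - x) / 2).
have h00 : 0 < h0 by rewrite lt_min !divr_gt0 // subr_gt0.
have h0e : h0 < e by rewrite gt_min ltr_pdivrMr // ltr_pMr // ltr1n.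
have xh1 : x + h0 < 1.
  rewrite -ltrBrDl gt_min; apply/orP; right.
  by rewrite ltr_pdivrMr // ltr_pMr ?ltr1n // subr_gt0.
have xlt : x < x + h0 by rewrite ltrDl.
have H1 : forall z, z \in `]x, x + h0[ -> is_derive z 1 u (u1 z).
  move=> z; rewrite in_itv/= => /andP[z1 z2]; apply: du.
  by rewrite (lt_trans x0 z1) (lt_trans z2 xh1).
have H2 : {within `[x, x + h0], continuous u}.
  apply: continuous_in_subspaceT => z; rewrite inE /= in_itv/= => /andP[z1 z2].
  have : 0 < z < 1 by rewrite (lt_le_trans x0 z1) (le_lt_trans z2 xh1).
  by move=> /du /(@ex_derive _ _ _ _ _ _ _) /derivable_cont.
have [c cI Hc'] := @MVT R u u1 x (x + h0) xlt H1 H2.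
move: cI; rewrite in_itv/= => /andP[c1 c2].
have Hp := He (c - x).
rewrite u10 subr0 /= gtr0_norm ?subr_gt0 // c1 ltrBlDl in Hp.
have xhe : x + h0 < x + e by rewrite ltrD2l.
have := Hp (lt_trans c2 xhe).
rewrite [_%:A]mulr1 subrK pmulr_rgt0 ?invr_gt0 ?subr_gt0 // => u1c.
have : u x < u (x + h0).
  by rewrite -subr_gt0 Hc' addrAC subrr add0r mulr_gt0.
by rewrite ltNge umax // (ltW xh1) andbT addr_ge0 // ltW.
Qed.

Lemma core (T A : R) (y : R -> R -> R) (rho G : R -> R) :
  0 < T -> 0 <= A ->
  {within [set p : R * R | 0 <= p.1 <= 1 /\ 0 <= p.2 < T],
     continuous (uncurry2 y)} ->
  (forall x t : R, 0 < x < 1 -> 0 < t < T ->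
     (forall x' : R, 0 <= x' <= 1 -> y x' t <= y x t) ->
     exists2 d, is_derive t 1 (fun s => y x s) d & d <= rho (y x t)) ->
  (forall t : R, 0 <= t < T -> y 0 t <= 0 /\ y 1 t <= 0) ->
  (forall x : R, 0 <= x <= 1 -> y x 0 <= A) ->
  (forall a b : R, a <= b -> G a <= G b) ->
  (forall a b : R, 0 <= b -> b < a -> G b < G a) ->
  continuous G ->
  (forall z : R, 0 < z -> is_derive z 1 G (`|rho z| + 1)^-1) ->
  forall t x : R, 0 <= t < T -> 0 <= x <= 1 -> G (y x t) <= G A + 2 * T.
Proof.
move=> T0 A0 cy Hd Hb Hi Gm Gs cG dG t0 x0 /andP[t00 t0T] /andP[x00 x01].
rewrite leNgt; apply/negP => Hbig.
pose K := `[(0:R), 1] `*` `[(0:R), t0].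
have cK : compact K := compact_setX (@segment_compact R 0 1) (@segment_compact R 0 t0).
have K0 : K !=set0 by exists (x0, t0); rewrite /K /= !in_itv /= x00 x01 t00 lexx.
pose psi := fun p : R * R => G (uncurry2 y p) - 2 * p.2.
have KS : K `<=` [set p : R * R | 0 <= p.1 <= 1 /\ 0 <= p.2 < T].
  move=> [a b]; rewrite /K /= !in_itv /= => -[/andP[-> ->] /andP[-> bt]].
  by rewrite (le_lt_trans bt t0T).
have cpsi : {within K, continuous psi}.
  have cyK := continuous_subspaceW KS cy.
  move=> p; apply: cvgB.
    exact: (continuous_comp (cyK p) (cG _)).
  have : continuous (fun q : R * R => 2 * q.2).
    move=> q; apply: cvgM; first exact: cvg_cst.
    exact: cvg_snd.
  by move=> /(continuous_subspaceT (A:=K)); apply.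
have [[xs ts] csK Hmax] := compact_EVT_max K0 cK cpsi.
move: csK; rewrite inE /K /= !in_itv /= => -[/andP[xs0 xs1] /andP[ts0 tst0]].
have Kin a b : 0 <= a <= 1 -> 0 <= b <= t0 -> psi (a, b) <= psi (xs, ts).
  by move=> ha hb; apply: Hmax; rewrite inE /K /= !in_itv /= ha hb.
have psic : G A < psi (xs, ts).
  have := Kin x0 t0; rewrite x00 x01 t00 lexx => /(_ isT isT).
  rewrite /psi /uncurry2 /=; lra.
have tsT : ts < T by apply: le_lt_trans t0T.
have ts0' : 0 < ts.
  rewrite lt_neqAle ts0 andbT; apply/negP => /eqP ts0e.
  move: psic; rewrite /psi /uncurry2 /= -ts0e.
  have := Gm _ _ (Hi xs (introT andP (conj xs0 xs1))); lra.
have hbt : 0 <= ts < T by rewrite ts0 tsT.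
have hx : 0 < xs < 1.
  rewrite !lt_neqAle xs0 xs1 !andbT; apply/andP; split; apply/negP => /eqP e.
    move: psic; rewrite /psi /uncurry2 /= -e.
    have := Gm _ _ (le_trans (Hb ts hbt).1 A0); lra.
  move: psic; rewrite /psi /uncurry2 /= e.
  have := Gm _ _ (le_trans (Hb ts hbt).2 A0); lra.
have ys0 : 0 < y xs ts.
  rewrite ltNge; apply/negP => yle.
  have := Gm _ _ (le_trans yle A0); move: psic; rewrite /psi /uncurry2 /=; lra.
have xmax x' : 0 <= x' <= 1 -> y x' ts <= y xs ts.
  move=> hx'; rewrite leNgt; apply/negP => hlt.
  have := Gs _ _ (ltW ys0) hlt.
  have := Kin x' ts hx'; rewrite ts0 tst0 => /(_ isT).
  rewrite /psi /uncurry2 /=; lra.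
have [d dd drho] := Hd xs ts hx (introT andP (conj ts0' tsT)) xmax.
set ys := y xs ts in ys0 xmax drho psic.
pose phi := fun s => G (y xs s).
have dGy := dG ys ys0.
have derphi : derivable phi ts 1.
  apply/derivable1_diffP; apply: (@differentiable_comp _ _ _ _ (fun s => y xs s) G).
    by apply/derivable1_diffP; exact: (@ex_derive _ _ _ _ _ _ _ dd).
  by apply/derivable1_diffP; exact: (@ex_derive _ _ _ _ _ _ _ dGy).
have dphi : is_derive ts 1 phi ((`|rho ys| + 1)^-1 * d).
  apply: DeriveDef => //; rewrite -derive1E.
  rewrite (@derive1_comp R (fun s => y xs s) G ts).
  - by rewrite !derive1E (@derive_val _ _ _ _ _ _ _ dd) (@derive_val _ _ _ _ _ _ _ dGy).
  - exact: (@ex_derive _ _ _ _ _ _ _ dd).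
  - exact: (@ex_derive _ _ _ _ _ _ _ dGy).
have D2 : 2 <= (`|rho ys| + 1)^-1 * d.
  rewrite leNgt; apply/negP => Dlt.
  have Hc : (fun h => h^-1 *: ((phi \o shift ts) (h *: 1) - phi ts)) @ 0^'
      --> (`|rho ys| + 1)^-1 * d.
    rewrite -(@derive_val _ _ _ _ _ _ _ dphi).
    exact: (@ex_derive _ _ _ _ _ _ _ dphi).
  have [e e0 He] := dnbhs0P (cvgr_lt _ Hc _ Dlt).
  pose m := Num.min (e / 2) (ts / 2).
  have m0 : 0 < m by rewrite lt_min !divr_gt0.
  have me : m < e by rewrite gt_min ltr_pdivrMr // ltr_pMr // ltr1n.
  have mts : m <= ts.
    rewrite ge_min; apply/orP; right.
    by rewrite ler_pdivrMr // ler_pMr // ler1n.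
  have := He (- m); rewrite normrN gtr0_norm // m0 me => /(_ isT).
  rewrite /= [_%:A]mulr1.
  have := Kin xs (- m + ts); rewrite xs0 xs1 => /(_ isT).
  have -> : 0 <= - m + ts <= t0 by apply/andP; split; lra.
  move=> /(_ isT); rewrite /psi /uncurry2 /= => Hle.
  rewrite /phi.
  set Dl := G (y xs (- m + ts)) - G (y xs ts).
  have HD : Dl <= 2 * (- m) by rewrite /Dl; lra.
  have : (- m)^-1 * (2 * (- m)) <= (- m)^-1 * Dl.
    by apply: ler_wnM2l => //; rewrite invr_le0 oppr_le0 ltW.
  rewrite mulrC -mulrA divff ?oppr_eq0 ?gt_eqF // mulr1 => H2 H3.
  by move: (le_lt_trans H2 H3); rewrite ltxx.
have : (`|rho ys| + 1) * 2 <= d.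
  have -> : d = (`|rho ys| + 1) * ((`|rho ys| + 1)^-1 * d).
    by rewrite mulrA divff ?mul1r // gt_eqF // ltr_pwDr.
  by apply: ler_wpM2l => //; rewrite addr_ge0.
have := ler_norm (rho ys); have := normr_ge0 (rho ys); lra.
Qed.

Definition GG (h : R -> R) (z : R) : R :=
  \int[@lebesgue_measure R]_(s in `[(0:R), z]) h s.

Section GGprops.
Variable h : R -> R.
Hypothesis ch : continuous h.
Hypothesis hpos : forall z : R, 0 < h z.
Hypothesis hle1 : forall z : R, h z <= 1.

Lemma GG_int (u : R) : (@lebesgue_measure R).-integrable `[(0:R), u] (EFin \o h).
Proof.
apply: continuous_compact_integrable; first exact: segment_compact.
exact: continuous_subspaceT.
Qed.

Lemma GG_der (z : R) : 0 < z -> is_derive z 1 (GG h) (h z).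
Proof.
move=> z0.
have zz : z < z + 1 by rewrite ltrDl.
have [d1 d2] := @continuous_FTC1_closed R h 0 z (z + 1) zz (GG_int _) z0 (@ch z).
by apply: DeriveDef => //; rewrite -derive1E.
Qed.

Lemma GG_le0 (z : R) : z <= 0 -> GG h z = 0.
Proof.
move=> z0; rewrite /GG; case: (ltgtP z 0) z0 => // [zlt|->] _.
  by rewrite set_itv_ge ?Rintegral_set0 // bnd_simp -ltNge.
by rewrite set_itv1 Rintegral_set1.
Qed.

Lemma GG_ge0 (z : R) : 0 <= GG h z.
Proof. by apply: Rintegral_ge0 => x _; exact: ltW. Qed.

Lemma GG_lez (z : R) : 0 <= z -> GG h z <= z.
Proof.
move=> z0; rewrite /GG.
apply: (@le_trans _ _ (\int[@lebesgue_measure R]_(s in `[(0:R), z]) (fun=> 1 : R) s)).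
  apply: le_Rintegral => //; first exact: GG_int.
  apply: continuous_compact_integrable; first exact: segment_compact.
  by apply: continuous_subspaceT; exact: cst_continuous.
rewrite Rintegral_cst //. have Hf : fine (lebesgue_measure (`[0, z] : set R)) = z.
  rewrite lebesgue_measure_itv /= lte_fin; case: ifP => /= H; first by rewrite subr0.
  by apply/eqP; rewrite eq_le z0 /= leNgt H.
move: Hf => /= ->. by rewrite mul1r.
Qed.

Lemma GG_mvt (a b : R) : 0 < a -> a <= b ->
  exists2 c, 0 < c & GG h b - GG h a = h c * (b - a).
Proof.
move=> a0 ab.
have H1 : forall x, x \in `]a, b[ -> is_derive x 1 (GG h) (h x).
  move=> x; rewrite in_itv /= => /andP[ax _]; apply: GG_der.
  exact: lt_trans ax.
have H2 : {within `[a, b], continuous (GG h)}.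
  apply: continuous_in_subspaceT => x; rewrite inE /= in_itv /= => /andP[ax _].
  apply: derivable_cont; apply: (@ex_derive _ _ _ _ _ _ _ (GG_der _)).
  exact: lt_le_trans ax.
have [c cI Hc] := @MVT_segment R (GG h) h a b ab H1 H2.
exists c => //; move: cI; rewrite in_itv /= => /andP[ac _].
exact: lt_le_trans ac.
Qed.

Lemma GG_mono (a b : R) : a <= b -> GG h a <= GG h b.
Proof.
move=> ab; case: (leP a 0) => a0.
  by rewrite GG_le0 // GG_ge0.
have [c c0 Hc] := GG_mvt a0 ab.
rewrite -subr_ge0 Hc mulr_ge0 // ?subr_ge0 //; exact: ltW.
Qed.

Lemma GG_strict (a b : R) : 0 <= b -> b < a -> GG h b < GG h a.
Proof.
move=> b0 ba; case: (ltgtP b 0) b0 => // [b0|b0] _.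
  have [c c0 Hc] := GG_mvt b0 (ltW ba).
  by rewrite -subr_gt0 Hc mulr_gt0 // subr_gt0.
rewrite b0 GG_le0 //; rewrite b0 in ba.
have a2 : 0 < a / 2 by rewrite divr_gt0.
have aa : a / 2 <= a by rewrite ler_pdivrMr // ler_pMr // ler1n.
have [c c0 Hc] := GG_mvt a2 aa.
have := GG_ge0 (a / 2).
have : 0 < h c * (a - a / 2) by rewrite mulr_gt0 // subr_gt0 ltr_pdivrMr // ltr_pMr // ltr1n.
lra.
Qed.

Lemma GG_lip (a b : R) : a <= b -> GG h b - GG h a <= b - a.
Proof.
move=> ab; case: (leP a 0) => a0.
  rewrite (GG_le0 a0) subr0; case: (leP b 0) => b0.
    by rewrite GG_le0 // subr_ge0.
  have := GG_lez (ltW b0); lra.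
have [c c0 Hc] := GG_mvt a0 ab.
by rewrite Hc ler_piMl // subr_ge0.
Qed.

Lemma GG_cont : continuous (GG h).
Proof.
move=> x; apply/cvgrPdist_lt => e e0; exists e => //= z xz.
case: (leP x z) => xz'.
  by rewrite distrC ger0_norm ?subr_ge0 ?GG_mono //; apply: le_lt_trans (GG_lip xz') _; rewrite -(ger0_norm (x := z - x)) ?subr_ge0 // distrC.
by rewrite ger0_norm ?subr_ge0 ?GG_mono ?ltW //; apply: le_lt_trans (GG_lip (ltW xz')) _; rewrite -(ger0_norm (x := x - z)) // subr_ge0 ltW.
Qed.


End GGprops.

Lemma unb_aux (h : R -> R) (F : (set R)^nat) : continuous h -> (forall z, 0 <= h z) ->
  {homo F : n m / (n <= m)%N >-> (n <= m)%O} -> (forall i, measurable (F i)) ->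
  (\int[@lebesgue_measure R]_(x in \bigcup_i F i) (h x)%:E = +oo)%E ->
  forall M : R, exists n, (M%:E < \int[@lebesgue_measure R]_(x in F n) (h x)%:E)%E.
Proof.
move=> ch h0 nd mF Hinf M.
have Hc : ((\int[@lebesgue_measure R]_(x in F i) (h x)%:E)%E @[i --> \oo] -->
   (\int[@lebesgue_measure R]_(x in \bigcup_i F i) (h x)%:E)%E).
  apply: ge0_nondecreasing_set_cvg_integral => //.
    move=> i; apply/measurable_EFinP; apply: measurable_funTS.
    exact: continuous_measurable_fun.
  by move=> i x _; rewrite lee_fin.
move: Hc; rewrite Hinf => /cvgeyPge /(_ (M + 1)) [N _ HN].
exists N; have := HN N (leqnn N); apply: lt_le_trans.
by rewrite lte_fin ltrDl.
Qed.

Lemma GGE (h : R -> R) (z : R) : continuous h ->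
  (\int[@lebesgue_measure R]_(x in `[(0%R:R), z]) (h x)%:E)%E = (GG h z)%:E.
Proof.
move=> ch; rewrite /GG /Rintegral fineK //.
apply: integrable_fin_num => //.
apply: continuous_compact_integrable; first exact: segment_compact.
exact: continuous_subspaceT.
Qed.

Lemma unb_pos (h : R -> R) : continuous h -> (forall z, 0 <= h z) ->
  (\int[@lebesgue_measure R]_(s in `[(0%R:R), +oo[) (h s)%:E = +oo)%E ->
  forall M : R, exists2 z : R, 0 <= z & M < GG h z.
Proof.
move=> ch h0 Hinf M.
have [n Hn] : exists n : nat, (M%:E < \int[@lebesgue_measure R]_(x in [set` `[(0%R:R), (0 + n%:R)%R]]) (h x)%:E)%E.
  apply: (@unb_aux h (fun n : nat => [set` `[(0:R), 0 + n%:R]]) ch h0).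
- move=> n m nm; apply/subsetPset; apply: subset_itvl.
  by rewrite bnd_simp lerD2l ler_nat.
- by move=> i; exact: measurable_itv.
- by rewrite -itv_bndy_bigcup_BRight.
move: Hn; rewrite add0r GGE // lte_fin => Hn.
by exists n%:R.
Qed.

Lemma unb_neg (h : R -> R) : continuous h -> (forall z, 0 <= h z) ->
  (\int[@lebesgue_measure R]_(s in `]-oo, (0%R:R)]) (h s)%:E = +oo)%E ->
  forall M : R, exists2 z : R, 0 <= z & M < GG (fun s => h (- s)) z.
Proof.
move=> ch h0 Hinf M.
have [n Hn] : exists n : nat, (M%:E < \int[@lebesgue_measure R]_(x in [set` Interval (BLeft (0 - n%:R)%R) (BRight (0%R:R))]) (h x)%:E)%E.
  apply: (@unb_aux h (fun n : nat => [set` Interval (BLeft (0 - n%:R)) (BRight (0:R))]) ch h0).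
- move=> n m nm; apply/subsetPset; apply: subset_itvr.
  by rewrite bnd_simp lerD2l lerN2 ler_nat.
- by move=> i; exact: measurable_itv.
- by rewrite -itvNy_bnd_bigcup_BLeft.
have chN : continuous (fun s => h (- s)).
  by move=> x; apply: continuous_comp; [exact: oppr_continuous | exact: ch].
move: Hn; rewrite sub0r.
have := @integration_by_substitution_oppr R h 0 n%:R (ler0n _ _) (continuous_subspaceT ch).
rewrite oppr0 => ->; rewrite GGE // lte_fin => Hn.
by exists n%:R.
Qed.
End S.

End Helpers.
Import Helpers.
Local Open Scope classical_set_scope.
Local Open Scope ring_scope.

Theorem lemma1 (R : realType) (f r : R -> R) :
  C2 f -> C2 r -> growth_cond r ->
  forall A T : R, 0 <= A -> 0 < T ->
  exists B : R, 0 <= B /\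
    forall y : R -> R -> R,
      classical_solution f r T y ->
      (forall x, 0 <= x <= 1 -> `|y x 0| <= A) ->
      forall t, 0 <= t < T -> forall x, 0 <= x <= 1 -> `|y x t| <= B.
Proof.
move=> [df _] [dr _] [gN gP] A T A0 T0.
have cr : continuous r by move=> x; exact: derivable_cont (dr x).
pose g := fun s : R => (`|r s| + 1)^-1.
have pos1 s : 0 < `|r s| + 1 by have := normr_ge0 (r s); lra.
have cg : continuous g.
  move=> x; apply: (@cvgV _ _ _ _ (fun s => `|r s| + 1)); first by rewrite gt_eqF.
  apply: cvgD; last exact: cvg_cst.
  exact: (continuous_comp (@cr x) (@norm_continuous _ _ _)).
have gpos s : 0 < g s by rewrite invr_gt0.
have gle1 s : g s <= 1 by rewrite invf_le1 // lerDr.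
have cgN : continuous (fun s => g (- s)).
  by move=> x; apply: continuous_comp; [exact: oppr_continuous | exact: cg].
have [z1 z10 Hz1] := unb_pos cg (fun z => ltW (gpos z)) gP (GG g A + 2 * T).
have [z2 z20 Hz2] := unb_neg cg (fun z => ltW (gpos z)) gN (GG (fun s => g (- s)) A + 2 * T).
exists (Num.max z1 z2); split; first by rewrite le_max z10.
move=> y [cy [hder [_ [_ [_ [heq [hbd _]]]]]]] hA t ht x hx.
have dxP (z t0 : R) : 0 < z < 1 -> 0 < t0 < T -> is_derive z 1 (fun z => y z t0) (dx y z t0).
  move=> hz ht0; have [e1 _ _ _] := hder z t0 hz ht0.
  by rewrite /dx derive1E; exact: derivableP.
have dxxP (z t0 : R) : 0 < z < 1 -> 0 < t0 < T -> is_derive z 1 (fun z => dx y z t0) (dxx y z t0).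
  move=> hz ht0; have [_ e2 _ _] := hder z t0 hz ht0.
  by rewrite /dxx derive1E; exact: derivableP.
have dtP (z t0 : R) : 0 < z < 1 -> 0 < t0 < T -> is_derive t0 1 (fun s => y z s) (dt y z t0).
  move=> hz ht0; have [_ _ e3 _] := hder z t0 hz ht0.
  by rewrite /dt derive1E; exact: derivableP.
have chain (z t0 : R) : 0 < z < 1 -> 0 < t0 < T -> dx y z t0 = 0 ->
    derive1 (fun z => f (y z t0)) z = 0.
  move=> hz ht0 h0; have [e1 _ _ _] := hder z t0 hz ht0.
  have := @derive1_comp R (fun z => y z t0) f z e1 (df _).
  by rewrite /comp => ->; rewrite -/(dx y z t0) h0 mulr0.
have upper (x0 t0 : R) : 0 < x0 < 1 -> 0 < t0 < T ->
    (forall x' : R, 0 <= x' <= 1 -> y x' t0 <= y x0 t0) -> dt y x0 t0 <= r (y x0 t0).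
  move=> hx0 ht0 hm.
  have [dx0 dxx0] := max_1d hx0 (fun z hz => dxP z t0 hz ht0) (dxxP x0 t0 hx0 ht0) hm.
  have := heq x0 t0 hx0 ht0; rewrite chain //; lra.
have lower (x0 t0 : R) : 0 < x0 < 1 -> 0 < t0 < T ->
    (forall x' : R, 0 <= x' <= 1 -> y x0 t0 <= y x' t0) -> r (y x0 t0) <= dt y x0 t0.
  move=> hx0 ht0 hm.
  have hm' : forall x' : R, 0 <= x' <= 1 -> - y x' t0 <= - y x0 t0.
    by move=> x' hx'; rewrite lerN2; exact: hm.
  have [dx0 dxx0] := @max_1d R (fun z => - y z t0) (fun z => - dx y z t0) x0 (- dxx y x0 t0) hx0
    (fun z hz => is_deriveN (dxP z t0 hz ht0)) (is_deriveN (dxxP x0 t0 hx0 ht0))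
    hm'.
  have := heq x0 t0 hx0 ht0; rewrite chain //; first lra.
  by apply/eqP; rewrite -oppr_eq0; apply/eqP.
have Gm1 : forall a b : R, a <= b -> GG g a <= GG g b by move=> a b ab; apply: GG_mono.
have Gs1 : forall a b : R, 0 <= b -> b < a -> GG g b < GG g a by move=> a b b0 ba; apply: GG_strict.
have Gc1 : continuous (GG g) by apply: GG_cont.
have Gd1 : forall z : R, 0 < z -> is_derive z 1 (GG g) (`|r z| + 1)^-1.
  by move=> z z0; apply: (GG_der cg).
pose gm := fun s : R => g (- s).
have gmpos s : 0 < gm s by exact: gpos.
have gmle1 s : gm s <= 1 by exact: gle1.
have Gm2 : forall a b : R, a <= b -> GG gm a <= GG gm b by move=> a b ab; apply: GG_mono.
have Gs2 : forall a b : R, 0 <= b -> b < a -> GG gm b < GG gm a by move=> a b b0 ba; apply: GG_strict.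
have Gc2 : continuous (GG gm) by apply: GG_cont.
have Gd2 : forall z : R, 0 < z -> is_derive z 1 (GG gm) (`|(fun z => - r (- z)) z| + 1)^-1.
  by move=> z z0; rewrite /= normrN; apply: (GG_der cgN).
have Hb1 : forall t0 : R, 0 <= t0 < T -> y 0 t0 <= 0 /\ y 1 t0 <= 0.
  by move=> t0 ht0; rewrite (hbd t0 ht0).1 (hbd t0 ht0).2.
have U := @core R T A y r (GG g) T0 A0 cy
  (fun x0 t0 hx0 ht0 hm => ex_intro2 _ _ (dt y x0 t0) (dtP x0 t0 hx0 ht0) (upper x0 t0 hx0 ht0 hm))
  Hb1
  (fun x0 hx0 => le_trans (ler_norm _) (hA x0 hx0))
  Gm1 Gs1 Gc1 Gd1 t x ht hx.
have cyN : {within [set p : R * R | 0 <= p.1 <= 1 /\ 0 <= p.2 < T],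
     continuous (uncurry2 (fun x t => - y x t))}.
  by move=> p; apply: cvgN; exact: cy.
have HdN : forall x0 t0 : R, 0 < x0 < 1 -> 0 < t0 < T ->
     (forall x' : R, 0 <= x' <= 1 -> - y x' t0 <= - y x0 t0) ->
     exists2 d, is_derive t0 1 (fun s => - y x0 s) d & d <= (fun z => - r (- z)) (- y x0 t0).
  move=> x0 t0 hx0 ht0 hm; exists (- dt y x0 t0).
    exact: (is_deriveN (dtP x0 t0 hx0 ht0)).
  rewrite /= opprK lerN2; apply: lower => // x' hx'.
  by rewrite -lerN2; exact: hm.
have HbN : forall t0 : R, 0 <= t0 < T -> - y 0 t0 <= 0 /\ - y 1 t0 <= 0.
  by move=> t0 ht0; rewrite (hbd t0 ht0).1 (hbd t0 ht0).2 oppr0.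
have HiN : forall x0 : R, 0 <= x0 <= 1 -> - y x0 0 <= A.
  move=> x0 hx0; apply: le_trans (hA x0 hx0).
  by rewrite -normrN; exact: ler_norm.
have L := @core R T A (fun x t => - y x t) (fun z => - r (- z)) (GG gm) T0 A0 cyN
  HdN HbN HiN Gm2 Gs2 Gc2 Gd2 t x ht hx.
have y1 : y x t < z1.
  rewrite ltNge; apply/negP => /Gm1; move: Hz1 U; lra.
have y2 : - y x t < z2.
  rewrite ltNge; apply/negP => /Gm2; move: Hz2 L; rewrite /gm /=; lra.
have m1 : z1 <= Num.max z1 z2 by rewrite le_max lexx.
have m2 : z2 <= Num.max z1 z2 by rewrite le_max lexx orbT.
rewrite ler_norml; apply/andP; split; lra.
Qed.
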